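(* Consider the SBCM described in the context with parameters $\gamma>0$ and $\delta\ge 0$, and let $\mathbf{x}$ be a steady state. Suppose there exists a persuadable node $i\in\mathcal{P}$ such that $$(1-w_{ij})(x_j-x_i)^2>\frac{1}{2\gamma}\quad\text{for all } j\sim i,$$ where $w_{ij}=w(x_i,x_j)$. Then the matrix $\mathbf{J}_{\mathcal{P}}$ (and hence the Jacobian matrix $\mathbf{J}$ of $\mathbf{F}$) evaluated at $\mathbf{x}$ has at least one strictly positive eigenvalue.
   Context: Let $\mathcal{G}$ be a finite undirected unweighted graph without self-loops, with node set $\mathcal{N}$; write $i\sim j$ if nodes $i,j$ are adjacent. The node set is partitioned into a set $\mathcal{Z}$ of zealots and a set $\mathcal{P}=\mathcal{N}\setminus\mathcal{Z}$ of persuadable nodes; every persuadable node is assumed to have at least one neighbor. Fix $\gamma,\delta\ge 0$. The influence function is $w(x_i,x_j)=\frac{1}{1+e^{\gamma(x_i-x_j)^2-\gamma\delta}}$ if $i\sim j$ and $w(x_i,x_j)=0$ otherwise. For an opinion vector $\mathbf{x}\in\mathbb{R}^{\mathcal{N}}$, the sigmoidal bounded-confidence model (SBCM) is $\frac{dx_i}{dt}=f_i(\mathbf{x})$, where $f_i(\mathbf{x})=\frac{\sum_j w(x_i,x_j)(x_j-x_i)}{\sum_j w(x_i,x_j)}$ for $i\in\mathcal{P}$ and $f_i(\mathbf{x})=0$ for $i\in\mathcal{Z}$; $\mathbf{F}=(f_i)_i$. A steady state is an $\mathbf{x}$ with $\mathbf{F}(\mathbf{x})=\mathbf{0}$. $\mathbf{J}$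 denotes the Jacobian matrix of $\mathbf{F}$ and $\mathbf{J}_{\mathcal{P}}$ its submatrix of entries $\partial f_i/\partial x_j$ with $i,j\in\mathcal{P}$. *)

(* Defs.v *)
From HB Require Import structures.
From mathcomp Require Import all_boot all_order all_algebra.
From mathcomp Require Import all_classical all_reals all_analysis.
Set Implicit Arguments. Unset Strict Implicit. Unset Printing Implicit Defensive.
Import Order.TTheory GRing.Theory Num.Theory.
Local Open Scope ring_scope.

Section SBCM.
Variables (R : realType) (T : finType).

Definition sig_w (gam del : R) (xi xj : R) : R :=
  1 / (1 + expR (gam * (xi - xj) ^+ 2 - gam * del)).

Definition infl (e : rel T) (gam del : R) (x : T -> R) (i j : T) : R :=
  if e i j then sig_w gam del (x i) (x j) else 0.

(* Right-hand side f_i of the SBCM; zealots Z have f_i = 0. *)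
Definition sbcm_f (e : rel T) (Z : {set T}) (gam del : R) (x : T -> R) (i : T) : R :=
  if i \in Z then 0
  else (\sum_(j : T) infl e gam del x i j * (x j - x i))
       / (\sum_(j : T) infl e gam del x i j).

Definition steady_state e Z gam del (x : T -> R) : Prop :=
  forall i, sbcm_f e Z gam del x i = 0.

Definition upd (x : T -> R) (j : T) (t : R) : T -> R :=
  fun k => if k == j then t else x k.

Definition sbcm_partial e Z gam del (x : T -> R) (i j : T) : R :=
  derive1 (fun t => sbcm_f e Z gam del (upd x j t) i) (x j).

Definition sbcm_J e Z gam del (x : T -> R) : 'M[R]_#|T| :=
  \matrix_(a, b) sbcm_partial e Z gam del x (enum_val a) (enum_val b).

(* Submatrix J_P over persuadable nodes P = ~: Z, indexed through enum_val. *)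
Definition sbcm_JP e (Z : {set T}) gam del (x : T -> R) : 'M[R]_#|~: Z| :=
  \matrix_(a, b) sbcm_partial e Z gam del x
     (enum_val (A := ~: Z) a) (enum_val (A := ~: Z) b).

End SBCM.

(* Main.v *)
Require Import Defs.
From HB Require Import structures.
From mathcomp Require Import all_boot all_order all_algebra.
From mathcomp Require Import all_classical all_reals all_analysis.
From mathcomp Require Import ring lra.
Import Order.TTheory GRing.Theory Num.Theory.
Import numFieldNormedType.Exports.
Local Open Scope ring_scope.
Local Open Scope classical_set_scope.

Section LA.
Variables (R : realType) (n : nat).

Definition bil (A : 'I_n -> 'I_n -> R) (v w : 'I_n -> R) :=
  \sum_a \sum_b v a * A a b * w b.

Lemma bil_exp A v w t :
  bil A (fun a => v a + t * w a) (fun a => v a + t * w a) =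
  bil A v v + t * bil A v w + t * bil A w v + t ^+ 2 * bil A w w.
Proof.
rewrite /bil !mulr_sumr -!big_split /=; apply: eq_bigr => a _.
rewrite !mulr_sumr -!big_split; apply: eq_bigr => b _ /=; ring.
Qed.

Lemma bil_sym A v w : (forall a b, A a b = A b a) -> bil A v w = bil A w v.
Proof.
move=> hA; rewrite /bil exchange_big; apply: eq_bigr => a _.
apply: eq_bigr => b _; rewrite (hA b a); ring.
Qed.

Lemma bil_scale A w k : bil A (fun a => k * w a) (fun a => k * w a) = k ^+ 2 * bil A w w.
Proof.
rewrite /bil mulr_sumr; apply: eq_bigr => a _; rewrite mulr_sumr.
apply: eq_bigr => b _; ring.
Qed.

Lemma bil_lin A B v w k :
  bil (fun a b => k * A a b - B a b) v w = k * bil A v w - bil B v w.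
Proof.
rewrite /bil mulr_sumr -sumrB; apply: eq_bigr => a _.
rewrite mulr_sumr -sumrB; apply: eq_bigr => b _; ring.
Qed.

Lemma sum_delta (F : 'I_n -> R) b : \sum_a F a * (a == b)%:R = F b.
Proof.
rewrite (bigD1 b) //= eqxx mulr1 big1 ?addr0 // => a /negbTE ->.
by rewrite mulr0.
Qed.

Lemma psd_zero A c : (forall a b, A a b = A b a) ->
  (forall w, 0 <= bil A w w) -> bil A c c = 0 -> forall w, bil A c w = 0.
Proof.
move=> hA hP hc w.
set B := bil A c w; set P := bil A w w.
have P0 : 0 <= P by apply: hP.
pose t := - B / (P + 1).
have := hP (fun a => c a + t * w a).
rewrite bil_exp hc (bil_sym A w c hA) -/B -/P.
have -> : 0 + t * B + t * B + t ^+ 2 * P = - (B ^+ 2 * (P + 2)) / (P + 1) ^+ 2.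
  rewrite /t; field; lra.
rewrite pmulr_lge0 ?invr_gt0 ?exprn_gt0 //; last by lra.
rewrite oppr_ge0 => h.
have : 0 <= B ^+ 2 * (P + 2) by rewrite mulr_ge0 ?sqr_ge0 //; lra.
move=> h2; have h3 : B ^+ 2 * (P + 2) = 0 by apply/eqP; rewrite eq_le h h2.
move/eqP: h3; rewrite mulf_eq0 sqrf_eq0 => /orP[/eqP //|]; lra.
Qed.


Lemma cont_sum (T : topologicalType) (I : Type) (r : seq I) (F : I -> T -> R) :
  (forall i, continuous (F i)) -> continuous (fun x => \sum_(i <- r) F i x).
Proof.
move=> hF; elim: r => [|a r IH] x.
  have -> : (fun x => \sum_(i <- [::]) F i x) = cst 0.
    by apply/funext => y; rewrite big_nil.
  exact: cst_continuous.
have -> : (fun x => \sum_(i <- a :: r) F i x) = (F a) + (fun x => \sum_(i <- r) F i x).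
  by apply/funext => y; rewrite big_cons.
apply: (@continuousD _ _ _ (F a) (fun x => \sum_(i <- r) F i x) x); [exact: hF | exact: IH].
Qed.

Lemma cont_bil (C : 'I_n -> 'I_n -> R) :
  continuous (fun v : 'rV[R]_n => bil C (fun a => v ord0 a) (fun a => v ord0 a)).
Proof.
rewrite /bil; apply: cont_sum => a; apply: cont_sum => b x.
apply: (continuousM (s := fun v : 'rV[R]_n => v ord0 a * C a b) (t := fun v => v ord0 b)).
  apply: (continuousM (s := fun v : 'rV[R]_n => v ord0 a) (t := fun v => C a b)).
    exact: coord_continuous.
  exact: cst_continuous.
exact: coord_continuous.
Qed.


Lemma pos_eig (J : 'M[R]_n) (d : 'I_n -> R) (i : 'I_n) :
  (forall a, 0 < d a) -> (forall a b, d a * J a b = d b * J b a) -> 0 < J i i ->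
  exists2 lam, 0 < lam & eigenvalue J lam.
Proof.
move=> dpos hsym hJ.
pose M a b := d a * J a b.
pose Dg a b : R := d a * (a == b)%:R.
have bilD v w : bil Dg v w = \sum_a d a * v a * w a.
  rewrite /bil; apply: eq_bigr => a _.
  transitivity (\sum_b (v a * d a * w b) * (b == a)%:R).
    by apply: eq_bigr => b _; rewrite /Dg eq_sym; ring.
  rewrite sum_delta; ring.
pose Nf (v : 'I_n -> R) := \sum_a d a * v a ^+ 2.
have NfE v : Nf v = bil Dg v v.
  by rewrite bilD; apply: eq_bigr => a _; ring.
have Nf_ge0 v : 0 <= Nf v.
  by apply: sumr_ge0 => a _; rewrite mulr_ge0 ?sqr_ge0 // ltW.
pose E := [set v : 'rV[R]_n | Nf (fun a => v ord0 a) = 1].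
pose f (v : 'rV[R]_n) := bil M (fun a => v ord0 a) (fun a => v ord0 a).
have E0 : E !=set0.
  exists (\row_a ((a == i)%:R * (Num.sqrt (d i))^-1)).
  rewrite /E /= /Nf.
  transitivity (\sum_a (d a * (Num.sqrt (d i))^-1 ^+ 2) * (a == i)%:R).
    by apply: eq_bigr => a _; rewrite mxE; case: (a == i) => /=; rewrite ?(mul1r, mul0r, mulr1, mulr0, expr0n) //=.
  rewrite sum_delta exprVn sqr_sqrtr ?ltW // divff // gt_eqF //.
have NfC : continuous (fun v : 'rV[R]_n => Nf (fun a => v ord0 a)).
  have -> : (fun v : 'rV[R]_n => Nf (fun a => v ord0 a)) =
            (fun v => bil Dg (fun a => v ord0 a) (fun a => v ord0 a)).
    by apply/funext => v; exact: NfE.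
  exact: cont_bil.
have Ecl : closed E.
  apply: (@preimage_closed _ _ (fun v : 'rV[R]_n => Nf (fun a => v ord0 a)) [set x | x = 1]).
    by move=> v _; exact: NfC.
  exact: closed_eq.
have Ecomp : compact E.
  pose K a := 1 + (d a)^-1.
  apply: (subclosed_compact Ecl (rV_compact (A := fun a => `[- K a, K a]%classic) _)).
    by move=> a; exact: segment_compact.
  move=> v /= Ev a; rewrite in_itv /=.
  have : d a * v ord0 a ^+ 2 <= 1.
    rewrite -Ev /Nf (bigD1 a) //= lerDl sumr_ge0 // => b _.
    by rewrite mulr_ge0 ?sqr_ge0 // ltW.
  have dk : d a * (d a)^-1 = 1 by rewrite divff // gt_eqF.
  have kp : 0 < (d a)^-1 by rewrite invr_gt0.
  move: (dpos a) dk kp; rewrite /K; set k := (d a)^-1; set y := v ord0 a; move=> da dk kp h.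
  have hy : y ^+ 2 <= k.
    have : k * (d a * y ^+ 2) <= k * 1 by rewrite ler_pM2l.
    by rewrite mulrA (mulrC k) dk mul1r mulr1.
  apply/andP; split; nra.
have fcont : {within E, continuous f}.
  by apply: continuous_subspaceT; exact: cont_bil.
have [c cE cmax] := EVT_max_rV E0 Ecomp fcont.
rewrite inE in cE.
set m := f c.
have key w : bil M w w <= m * Nf w.
  have [Nw0|Nwn0] := eqVneq (Nf w) 0.
    have w0 a : w a = 0.
      have := psumr_eq0P (fun b _ => mulr_ge0 (ltW (dpos b)) (sqr_ge0 (w b))) Nw0 (i:=a) isT.
      by move/eqP; rewrite mulf_eq0 gt_eqF //= sqrf_eq0 => /eqP.
    rewrite Nw0 mulr0 /bil big1 // => a _; rewrite big1 // => b _; rewrite w0; ring.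
  have Nwp : 0 < Nf w by rewrite lt_neqAle eq_sym Nwn0 Nf_ge0.
  set s := Num.sqrt (Nf w).
  have sp : 0 < s by rewrite sqrtr_gt0.
  have s2 : s ^+ 2 = Nf w by rewrite sqr_sqrtr // ltW.
  have rowE : (fun a => (\row_a0 (s^-1 * w a0)) ord0 a) = (fun a => s^-1 * w a).
    by apply/funext => a; rewrite mxE.
  have vE : (\row_a (s^-1 * w a)) \in E.
    rewrite inE /E /= rowE /Nf.
    transitivity (s^-1 ^+ 2 * Nf w).
      by rewrite /Nf mulr_sumr; apply: eq_bigr => a _; ring.
    by rewrite -s2 exprVn mulVf // expf_neq0 // gt_eqF.
  have := cmax _ vE; rewrite /f rowE bil_scale -/(f c) -/m => h.
  have h2 : s ^+ 2 * (s^-1 ^+ 2 * bil M w w) <= s ^+ 2 * m by rewrite ler_pM2l // exprn_gt0.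
  by rewrite mulrA -exprMn divff ?gt_eqF // expr1n mul1r s2 mulrC in h2.
pose A a b := m * Dg a b - M a b.
have Asym a b : A a b = A b a.
  rewrite /A /M /Dg /= (hsym a b); case: (eqVneq a b) => [->|h] //=.
  by rewrite !mulr0.
have Apsd w : 0 <= bil A w w by rewrite /A bil_lin -NfE subr_ge0 key.
pose c' a := c ord0 a.
have Ac : bil A c' c' = 0 by rewrite /A bil_lin -NfE cE -/(f c) -/m mulr1 subrr.
have hz := psd_zero A c' Asym Apsd Ac.
have heq b : \sum_a c' a * M a b = m * (d b * c' b).
  have := hz (fun a => (a == b)%:R); rewrite /bil.
  under eq_bigr do rewrite sum_delta.
  have -> : \sum_a c' a * A a b = m * (d b * c' b) - \sum_a c' a * M a b.
    transitivity (\sum_a (m * (c' a * d a)) * (a == b)%:R - \sum_a c' a * M a b).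
      by rewrite -sumrB; apply: eq_bigr => a _; rewrite /A /Dg; ring.
    by rewrite sum_delta; congr (_ - _); ring.
  by move/eqP; rewrite subr_eq0 => /eqP <-.
exists m.
  have := key (fun a => (a == i)%:R).
  have -> : bil M (fun a => (a == i)%:R) (fun a => (a == i)%:R) = M i i.
    rewrite /bil; transitivity (\sum_a M a i * (a == i)%:R); last by rewrite sum_delta.
    by apply: eq_bigr => a _; rewrite sum_delta mulrC.
  have -> : Nf (fun a => (a == i)%:R) = d i.
    rewrite /Nf -[RHS]sum_delta; apply: eq_bigr => a _.
    by case: (a == i) => /=; rewrite ?expr1n ?expr0n.
  rewrite /M => h; have := dpos i; have := hJ; nra.
apply/eigenvalueP; exists (\row_a (d a * c' a)).
  apply/rowP => b; rewrite !mxE -heq; apply: eq_bigr => a _; rewrite !mxE /M; ring.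
apply/negP => /eqP h0.
suff : Nf c' = 0 by rewrite [Nf c']cE => /eqP; rewrite oner_eq0.
rewrite /Nf big1 // => a _.
have := congr1 (fun u : 'rV[R]_n => u ord0 a) h0; rewrite !mxE => /eqP.
by rewrite mulf_eq0 gt_eqF //= => /eqP ->; rewrite expr0n mulr0.
Qed.

End LA.

Local Close Scope classical_set_scope.

Section Calc.
Variables (R : realType) (gam del : R).

Definition Gf (u : R) : R := 1 / (1 + expR (gam * u ^+ 2 - gam * del)).
Definition phi u := Gf u * u.
Definition dphi u := Gf u * (1 - 2 * gam * u ^+ 2 * (1 - Gf u)).

Lemma sig_wE a b : sig_w gam del a b = Gf (b - a).
Proof. by rewrite /sig_w /Gf -sqrrN opprB. Qed.

Lemma Gf_gt0 u : 0 < Gf u.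
Proof. by rewrite /Gf div1r invr_gt0 ltr_wpDr ?expR_ge0 ?ltr01 // ltW ?expR_gt0. Qed.

Lemma dphi_even u : dphi (- u) = dphi u.
Proof. by rewrite /dphi /Gf !sqrrN. Qed.

Definition dGf u := - (1 + expR (gam * u ^+ 2 - gam * del)) ^- 2 *
   (expR (gam * u ^+ 2 - gam * del) * (gam * (2 * u))).

Lemma is_derive_Gf (u : R) : is_derive u (1:R) Gf (dGf u).
Proof.
pose g := fun v : R => gam * v ^+ 2 - gam * del.
have dsq : is_derive u (1:R) (fun v : R => v ^+ 2) (2 * u).
  have h := is_deriveM (is_derive_id u (1:R)) (is_derive_id u (1:R)).
  have -> : (fun v : R => v ^+ 2) = id * id by apply/funext => v; rewrite /= expr2.
  apply: (is_derive_eq h).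
  by rewrite /= /GRing.scale /=; ring.
have dg : is_derive u (1:R) g (gam * (2 * u)).
  have h1 := is_deriveZ gam dsq.
  have h2 := is_deriveB h1 (is_derive_cst (gam * del) u (1:R)).
  apply: (is_derive_eq h2).
  by rewrite /GRing.scale /=; ring.
have dE : is_derive u (1:R) (expR \o g) (expR (g u) * (gam * (2 * u))).
  exact: is_derive1_comp.
have dD : is_derive u (1:R) (fun v => 1 + expR (g v)) (expR (g u) * (gam * (2 * u))).
  have h := is_deriveD (is_derive_cst (1:R) u (1:R)) dE.
  apply: (is_derive_eq h).
  by rewrite add0r.
have dpos : 1 + expR (g u) != 0 by rewrite gt_eqF // ltr_wpDr ?expR_ge0 ?ltr01 // ltW ?expR_gt0.
have dV := @is_deriveV _ (fun v => 1 + expR (g v)) u _ _ dpos dD.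
have -> : Gf = (fun v => (1 + expR (g v))^-1).
  by apply/funext => v; rewrite /Gf div1r.
apply: (is_derive_eq dV).
by rewrite /GRing.scale /=.
Qed.

Lemma is_derive_phi (u : R) : is_derive u (1:R) phi (dphi u).
Proof.
have h := is_deriveM (is_derive_Gf u) (is_derive_id u (1:R)).
apply: (is_derive_eq h).
have dpos : 1 + expR (gam * u ^+ 2 - gam * del) != 0.
  by rewrite gt_eqF // ltr_wpDr ?expR_ge0 ?ltr01 // ltW ?expR_gt0.
rewrite /dphi /dGf /Gf /GRing.scale /=.
field; exact: dpos.
Qed.

End Calc.
Arguments Gf {R}. Arguments phi {R}. Arguments dphi {R}. Arguments dGf {R}.
Arguments is_derive_Gf {R}. Arguments is_derive_phi {R}. Arguments sig_wE {R}. Arguments Gf_gt0 {R}. Arguments dphi_even {R}.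

Lemma is_derive_sumT (R : realType) (I : finType) (h : I -> R -> R) (x : R) (dh : I -> R) :
  (forall i, is_derive x (1:R) (h i) (dh i)) ->
  is_derive x (1:R) (fun t => \sum_i h i t) (\sum_i dh i).
Proof.
move=> H; rewrite -fct_sumE.
by elim/big_ind2 : _ => // [|] *; [exact: is_derive_cst|exact: is_deriveD].
Qed.

Section Sbcm.
Variables (R : realType) (T : finType) (e : rel T) (Z : {set T}) (gam del : R).

Definition Nsum (y : T -> R) i := \sum_k (e i k)%:R * phi gam del (y k - y i).
Definition Ssum (y : T -> R) i := \sum_k (e i k)%:R * Gf gam del (y k - y i).

Lemma fE y i : i \notin Z -> sbcm_f e Z gam del y i = Nsum y i / Ssum y i.
Proof.
move=> hi; rewrite /sbcm_f (negbTE hi); congr (_ / _); apply: eq_bigr => k _;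
  rewrite /infl sig_wE /phi; case: (e i k) => /=; rewrite ?mulr1n ?mulr0n ?mul1r ?mul0r //.
Qed.

Lemma upd_id (x : T -> R) j : upd x j (x j) = x.
Proof. by apply/funext => k; rewrite /upd; case: eqP => [->|]. Qed.

Lemma du (x : T -> R) j k : is_derive (x j) (1:R) (fun t => upd x j t k) (k == j)%:R.
Proof.
rewrite /upd; case: (eqVneq k j) => [hk|hk] /=.
  by apply: (is_derive_eq (is_derive_id _ _)); rewrite mulr1n.
by apply: (is_derive_eq (is_derive_cst (x k) _ _)); rewrite mulr0n.
Qed.

Lemma partialE (x : T -> R) i j : i \notin Z -> 0 < Ssum x i -> Nsum x i = 0 ->
  sbcm_partial e Z gam del x i j = (Ssum x i)^-1 *
    \sum_k (e i k)%:R * (dphi gam del (x k - x i) * ((k == j)%:R - (i == j)%:R)).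
Proof.
move=> hi Sp N0; rewrite /sbcm_partial.
have -> : (fun t => sbcm_f e Z gam del (upd x j t) i) =
          (fun t => Nsum (upd x j t) i) * (fun t => (Ssum (upd x j t) i)^-1).
  by apply/funext => t; rewrite fE.
have dterm k : is_derive (x j) (1:R) (fun t => (e i k)%:R * phi gam del (upd x j t k - upd x j t i))
    ((e i k)%:R * (dphi gam del (x k - x i) * ((k == j)%:R - (i == j)%:R))).
  have hB := is_deriveB (du x j k) (du x j i).
  have h := @is_derive1_comp _ (phi gam del) (fun t => upd x j t k - upd x j t i) (x j) _ _
    (is_derive_phi gam del (upd x j (x j) k - upd x j (x j) i)) hB.
  rewrite upd_id in h.
  have h2 := is_deriveZ ((e i k)%:R) h.
  exact: h2.
have dtermS k : is_derive (x j) (1:R) (fun t => (e i k)%:R * Gf gam del (upd x j t k - upd x j t i))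
    ((e i k)%:R * (dGf gam del (x k - x i) * ((k == j)%:R - (i == j)%:R))).
  have hB := is_deriveB (du x j k) (du x j i).
  have h := @is_derive1_comp _ (Gf gam del) (fun t => upd x j t k - upd x j t i) (x j) _ _
    (is_derive_Gf gam del (upd x j (x j) k - upd x j (x j) i)) hB.
  rewrite upd_id in h.
  have h2 := is_deriveZ ((e i k)%:R) h.
  exact: h2.
have dN := @is_derive_sumT _ _ (fun k t => (e i k)%:R * phi gam del (upd x j t k - upd x j t i)) (x j) _ dterm.
have dS := @is_derive_sumT _ _ (fun k t => (e i k)%:R * Gf gam del (upd x j t k - upd x j t i)) (x j) _ dtermS.
have Sn0 : Ssum (upd x j (x j)) i != 0 by rewrite upd_id gt_eqF.
have dSV := @is_deriveV _ (fun t => Ssum (upd x j t) i) (x j) _ _ Sn0 dS.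
have h := is_deriveM dN dSV.
rewrite derive1E.
have := @derive_val _ _ _ _ _ _ _ h.
move=> ->.
by rewrite /GRing.scale /= !upd_id -/(Nsum x i) N0 mul0r add0r.
Qed.

End Sbcm.
Arguments Nsum {R T}. Arguments Ssum {R T}. Arguments fE {R T}. Arguments partialE {R T}.
Arguments upd_id {R T}.

Section Main.
Variables (R : realType) (T : finType) (e : rel T) (Z : {set T}) (gam del : R).

Lemma sum_deltaT (F : T -> R) q : \sum_k F k * (k == q)%:R = F q.
Proof.
rewrite (bigD1 q) //= eqxx mulr1 big1 ?addr0 // => a /negbTE ->.
by rewrite mulr0.
Qed.

Lemma zealot_row (x : T -> R) p q : p \in Z -> sbcm_partial e Z gam del x p q = 0.
Proof.
move=> hp; rewrite /sbcm_partial.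
have -> : (fun t => sbcm_f e Z gam del (upd x q t) p) = cst 0.
  by apply/funext => t; rewrite /sbcm_f hp.
by rewrite derive1E derive_cst.
Qed.

Lemma eig_transfer (x : T -> R) lam : 0 < lam ->
  eigenvalue (sbcm_JP e Z gam del x) lam -> eigenvalue (sbcm_J e Z gam del x) lam.
Proof.
move=> lp /eigenvalueP [u hu hn0]; apply/eigenvalueP.
set F := sbcm_partial e Z gam del x.
have [b0 hb0] : exists b0, u ord0 b0 != 0.
  apply/existsP; move: hn0; apply: contraR; rewrite negb_exists => /forallP h.
  by apply/eqP/rowP => b; rewrite mxE; apply/eqP/negPn/h.
have Pb0 := enum_valP b0.
pose rk := enum_rank_in Pb0.
pose U0 t := if t \in ~: Z then u ord0 (rk t)
             else lam^-1 * \sum_b u ord0 b * F (enum_val b) t.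
have key q : \sum_(t : T) U0 t * F t q = \sum_b u ord0 b * F (enum_val b) q.
  rewrite (bigID (fun t => t \in ~: Z)) /= [X in _ + X]big1 ?addr0; last first.
    by move=> t; rewrite inE negbK => hz; rewrite /F zealot_row // mulr0.
  rewrite big_enum_val; apply: eq_bigr => b _.
  by rewrite /U0 enum_valP /rk enum_valK_in.
exists (\row_a U0 (enum_val a)).
  apply/rowP => c; rewrite !mxE.
  rewrite (eq_bigr (fun j => U0 (enum_val j) * F (enum_val j) (enum_val c))); last first.
    by move=> j _; rewrite /sbcm_J !mxE.
  rewrite -(big_enum_val (A := fun _ => true) (fun t => U0 t * F t (enum_val c))) /=.
  transitivity (\sum_(t : T) U0 t * F t (enum_val c)); first by apply: eq_bigl.
  rewrite key /U0; case: ifP => hc; last first.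
    by rewrite mulrA divff ?gt_eqF // mul1r.
  have := congr1 (fun v : 'rV_ _ => v ord0 (rk (enum_val c))) hu.
  rewrite !mxE => <-; apply: eq_bigr => b _; rewrite /sbcm_JP mxE /rk enum_rankK_in //.
have hv : (\row_a U0 (enum_val a)) ord0 (enum_rank (enum_val b0)) != 0.
  by rewrite mxE enum_rankK /U0 Pb0 /rk enum_valK_in.
by apply: contraNneq hv => ->; rewrite mxE.
Qed.


Lemma mainJP (x : T -> R) : symmetric e -> irreflexive e ->
  (forall i, i \notin Z -> exists j, e i j) -> 0 < gam ->
  steady_state e Z gam del x ->
  (exists i, i \notin Z /\
     forall j, e i j ->
       (1 - sig_w gam del (x i) (x j)) * (x j - x i) ^+ 2 > 1 / (2 * gam)) ->
  exists2 lam, 0 < lam & eigenvalue (sbcm_JP e Z gam del x) lam.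
Proof.
move=> hs hirr hnb gp hss [i0 [hi0 hc]].
have Sp p : p \notin Z -> 0 < Ssum e gam del x p.
  move=> hp; have [j hj] := hnb p hp.
  rewrite /Ssum (bigD1 j) //= hj /= mulr1n mul1r.
  apply: (lt_le_trans (Gf_gt0 gam del (x j - x p))).
  rewrite lerDl sumr_ge0 // => k _.
  by rewrite mulr_ge0 ?ler0n // ltW // Gf_gt0.
have N0 p : p \notin Z -> Nsum e gam del x p = 0.
  move=> hp; have := hss p; rewrite (fE e Z gam del x p hp) => /eqP.
  by rewrite mulf_eq0 invr_eq0 (gt_eqF (Sp p hp)) orbF => /eqP.
have hP (a : 'I_#|~: Z|) : enum_val a \notin Z.
  by have := enum_valP a; rewrite inE.
pose d (a : 'I_#|~: Z|) := Ssum e gam del x (enum_val a).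
pose pd p q := \sum_k (e p k)%:R * (dphi gam del (x k - x p) * ((k == q)%:R - (p == q)%:R)).
have JPE a b : sbcm_JP e Z gam del x a b = (d a)^-1 * pd (enum_val a) (enum_val b).
  by rewrite /sbcm_JP mxE (partialE e Z gam del x _ _ (hP a) (Sp _ (hP a)) (N0 _ (hP a))).
have pd_off p q : p != q -> pd p q = (e p q)%:R * dphi gam del (x q - x p).
  move=> hpq; rewrite /pd (negbTE hpq).
  rewrite -[RHS](sum_deltaT (fun k => (e p k)%:R * dphi gam del (x k - x p))).
  by apply: eq_bigr => k _ /=; rewrite mulr0n subr0 mulrA.
have hi0' : i0 \in ~: Z by rewrite inE.
have dneg k : e i0 k -> dphi gam del (x k - x i0) < 0.
  move=> hk; have := hc k hk; rewrite sig_wE /dphi.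
  set G := Gf gam del (x k - x i0); set u := x k - x i0 => h.
  have Gp : 0 < G := Gf_gt0 gam del _.
  have g2 : 0 < 2 * gam by rewrite mulr_gt0.
  have h' : 2 * gam * (1 / (2 * gam)) < 2 * gam * ((1 - G) * u ^+ 2) by rewrite ltr_pM2l.
  rewrite mul1r divff ?gt_eqF // in h'.
  nra.
apply: (@pos_eig R _ _ d (enum_rank_in hi0' i0)).
- by move=> a; apply: Sp.
- move=> a b; rewrite !JPE !mulrA !divff ?gt_eqF ?Sp ?hP // !mul1r.
  case: (eqVneq (enum_val a) (enum_val b)) => [->//|hab].
  rewrite !pd_off // 1?eq_sym // hs; congr (_ * _).
  by rewrite -dphi_even opprB.
- rewrite JPE enum_rankK_in //; apply: mulr_gt0; first by rewrite invr_gt0 Sp.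
  rewrite /pd eqxx /=; have [j hj] := hnb i0 hi0.
  have hji : (j == i0) = false.
    by apply/negbTE; apply: contraTneq hj => ->; rewrite hirr.
  rewrite (bigD1 j) //= hj hji /=.
  have h1 : 0 < 1%:R * (dphi gam del (x j - x i0) * (0%:R - 1)).
    by rewrite mulr1n mul1r sub0r mulrN1 oppr_gt0 dneg.
  have h2 : 0 <= \sum_(k | k != j) (e i0 k)%:R * (dphi gam del (x k - x i0) * ((k == i0)%:R - 1)).
    apply: sumr_ge0 => k _; case hk: (e i0 k); last by rewrite mulr0n mul0r.
    have -> : (k == i0) = false.
      by apply/negbTE; apply: contraTneq hk => ->; rewrite hirr.
    by rewrite /= mulr1n mul1r mulr0n add0r mulrN1 oppr_ge0 ltW // dneg.
  lra.
Qed.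

End Main.
Arguments mainJP {R T}. Arguments eig_transfer {R T}.

Theorem proposition1 (R : realType) (T : finType) (e : rel T) (Z : {set T})
  (gam del : R) (x : T -> R) :
  symmetric e -> irreflexive e ->
  (forall i, i \notin Z -> exists j, e i j) ->
  0 < gam -> 0 <= del ->
  steady_state e Z gam del x ->
  (exists i, i \notin Z /\
     forall j, e i j ->
       (1 - sig_w gam del (x i) (x j)) * (x j - x i) ^+ 2 > 1 / (2 * gam)) ->
  (exists2 lam : R, 0 < lam & eigenvalue (sbcm_JP e Z gam del x) lam) /\
  (exists2 lam : R, 0 < lam & eigenvalue (sbcm_J e Z gam del x) lam).
Proof.
move=> hs hirr hnb gp _ hss hex.
have [lam lp hl] := mainJP e Z gam del x hs hirr hnb gp hss hex.
split; exists lam => //.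
exact: (eig_transfer e Z gam del x lam lp hl).
Qed.
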